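(* Let $\mathbb{K}$ be a field, $n\ge3$ (so that $\mathbb{D}_n$ is defined), and $\alpha_1,\dots,\alpha_n\in\mathbb{K}^*$. If $n$ is even, then $X_{\mathbb{D}_n}(\alpha_1,\dots,\alpha_n)\simeq X_{\mathbb{D}_n}(\alpha,\beta,1,\dots,1)$ for some $\alpha,\beta\in\mathbb{K}^*$ depending on the $\alpha_i$. If $n$ is odd, then $X_{\mathbb{D}_n}(\alpha_1,\dots,\alpha_n)\simeq X_{\mathbb{D}_n}(\alpha,1,\dots,1)$ for some $\alpha\in\mathbb{K}^*$ depending on the $\alpha_i$.
   Context: $X_{\mathbb{D}_n}(\alpha_1,\dots,\alpha_n)$ is the affine variety over $\mathbb{K}$ in variables $x_1,\dots,x_n,x'_1,\dots,x'_n$ defined by $x_1x'_1=1+\alpha_1x_3$, $x_2x'_2=1+\alpha_2x_3$, $x_3x'_3=1+\alpha_3x_1x_2x_4$, $x_ix'_i=1+\alpha_ix_{i-1}x_{i+1}$ for $4\le i\le n-1$, $x_nx'_n=1+\alpha_nx_{n-1}$ (with the obvious modifications for $n=3$, where $x_3x'_3=1+\alpha_3x_1x_2$). It corresponds to the tree $\mathbb{D}_n$: vertices $1,2$ are leaves attached to vertex $3$, and $3,4,\dots,n$ form a path. *)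

(* Defs.v *)
From HB Require Import structures.
From mathcomp Require Import all_boot all_order all_algebra.
From mathcomp Require Import mpoly.
Set Implicit Arguments. Unset Strict Implicit. Unset Printing Implicit Defensive.
Import Order.TTheory GRing.Theory.
Local Open Scope ring_scope.

(* Polynomial ring in 2n variables: x_k = variable k, x'_k = variable n+k,
   for 0 <= k < n (0-based: paper's x_{k+1} is our x_k). *)
Section XD.
Variables (K : fieldType) (n : nat).

Definition PR := {mpoly K[n + n]}.

(* variable with nat index k (0 if k >= 2n; never used out of range) *)
Definition Xv (k : nat) : {mpoly K[n + n]} :=
  oapp (fun j : 'I_(n + n) => 'X_j) 0 (insub k).

(* right-hand monomial of the exchange relation at (0-based) vertex i
   of the tree D_n: vertices 0,1 are leaves at 2; 2,3,...,n-1 is a path. *)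
Definition Dmon (i : nat) : {mpoly K[n + n]} :=
  if (i < 2)%N then Xv 2
  else if i == 2%N then Xv 0 * Xv 1 * (if (3 < n)%N then Xv 3 else 1)
  else if (i.+1 < n)%N then Xv i.-1 * Xv i.+1
  else Xv i.-1.

Definition Dgen (a : 'I_n -> K) (i : 'I_n) : {mpoly K[n + n]} :=
  Xv i * Xv (n + i) - (1 + a i *: Dmon i).

Definition inDideal (a : 'I_n -> K) (p : {mpoly K[n + n]}) : Prop :=
  exists c : 'I_n -> {mpoly K[n + n]}, p = \sum_(i < n) c i * Dgen a i.

(* X_{D_n}(a) ~= X_{D_n}(b): K-algebra isomorphism of the coordinate rings
   K[x,x']/I_a and K[x,x']/I_b, given by polynomial substitutions phi
   (A_a -> A_b, x_j |-> phi_j) and psi (A_b -> A_a), well defined and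
   mutually inverse modulo the ideals. *)
Definition XD_iso (a b : 'I_n -> K) : Prop :=
  exists (phi psi : (n + n).-tuple {mpoly K[n + n]}),
    [/\ forall i, inDideal b (comp_mpoly phi (Dgen a i)),
        forall i, inDideal a (comp_mpoly psi (Dgen b i)),
        forall j, inDideal a (comp_mpoly psi (tnth phi j) - 'X_j)
      & forall j, inDideal b (comp_mpoly phi (tnth psi j) - 'X_j)].
End XD.

(* Main.v *)
Require Import Defs.
From HB Require Import structures.
From mathcomp Require Import all_boot all_order all_algebra.
From mathcomp Require Import mpoly zify ring.
Set Implicit Arguments. Unset Strict Implicit. Unset Printing Implicit Defensive.
Import GRing.Theory.
Local Open Scope ring_scope.

Lemma scM (K : fieldType) m (a b : K) (x y : {mpoly K[m]}) :
  (a *: x) * (b *: y) = (a*b) *: (x*y).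
Proof. by rewrite -!mul_mpolyC mpolyCM; ring. Qed.
Lemma scM2 (K : fieldType) m (a : K) (x y : {mpoly K[m]}) :
  (a *: x) * y = a *: (x*y).
Proof. by rewrite -!mul_mpolyC; ring. Qed.

Section Key.
Variables (K : fieldType) (n : nat) (hn : (3 <= n)%N).

Definition snat (lam : nat -> K) (k : nat) : K :=
  if (k < n)%N then lam k else (lam (k - n)%N)^-1.

Definition phi (lam : nat -> K) : (n + n).-tuple {mpoly K[n + n]} :=
  [tuple snat lam j *: 'X_j | j < n + n].

Definition Dcf (f : nat -> K) (i : nat) : K :=
  if (i < 2)%N then f 2%N
  else if i == 2%N then f 0%N * f 1%N * (if (3 < n)%N then f 3%N else 1)
  else if (i.+1 < n)%N then f i.-1 * f i.+1
  else f i.-1.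

Lemma compXv lam k : (k < n + n)%N ->
  comp_mpoly (phi lam) (Xv K n k) = snat lam k *: Xv K n k.
Proof.
move=> hk; rewrite /Xv insubT /= comp_mpolyXU -tnth_nth tnth_mktuple //.
Qed.

Lemma compDmon lam (i : nat) : (i < n)%N ->
  comp_mpoly (phi lam) (Dmon K n i) = Dcf lam i *: Dmon K n i.
Proof.
move=> hi; rewrite /Dmon /Dcf.
have sn k : (k < n)%N -> snat lam k = lam k by rewrite /snat => ->.
case: ifP => h1.
  by rewrite compXv ?sn //; lia.
case: ifP => h2.
  rewrite !rmorphM /= !compXv ?sn //; try lia.
  case: ifP => h3.
    by rewrite compXv ?sn ?scM //; lia.
  by rewrite comp_mpoly1 !mulr1 scM.
case: ifP => h3.
  by rewrite rmorphM /= !compXv ?sn ?scM //; lia.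
by rewrite compXv ?sn //; lia.
Qed.


Lemma Dgen_in (a : 'I_n -> K) i : inDideal a (Dgen a i).
Proof.
exists (fun j => if j == i then 1 else 0).
rewrite (bigD1 i) //= eqxx mul1r big1 ?addr0 // => j /negbTE ->; exact: mul0r.
Qed.

Lemma zero_in (a : 'I_n -> K) : inDideal a 0.
Proof. by exists (fun _ => 0); rewrite big1 // => j _; rewrite mul0r. Qed.

Lemma compDgen lam (a b : 'I_n -> K) (hl : forall k, lam k != 0)
  (hb : forall i : 'I_n, b i = a i * Dcf lam i) i :
  comp_mpoly (phi lam) (Dgen a i) = Dgen b i.
Proof.
have hi := ltn_ord i.
rewrite /Dgen rmorphB rmorphD rmorphM /= comp_mpoly1 comp_mpolyZ compDmon //.
rewrite !compXv; try lia.
rewrite scM /snat hi ifF; last by lia.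
by rewrite addKn mulfV ?hl // scale1r scalerA hb.
Qed.

Lemma DcfV f (hf : forall k, f k != 0) i :
  Dcf f i * Dcf (fun k => (f k)^-1) i = 1.
Proof.
rewrite /Dcf; case: ifP => _; first by rewrite mulfV.
case: ifP => _.
  case: ifP => _; first by field; rewrite !hf.
  by field; rewrite !hf.
by case: ifP => _; field; rewrite ?hf.
Qed.

Lemma key lam (a b : 'I_n -> K) (hl : forall k, lam k != 0)
  (hb : forall i : 'I_n, b i = a i * Dcf lam i) : XD_iso a b.
Proof.
have hl' : forall k, (lam k)^-1 != 0 by move=> k; rewrite invr_eq0.
have hb' : forall i : 'I_n, a i = b i * Dcf (fun k => (lam k)^-1) i.
  by move=> i; rewrite hb -mulrA DcfV // mulr1.
have inv1 : forall j, snat (fun k => (lam k)^-1) j * snat lam j = 1.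
  by move=> j; rewrite /snat; case: ifP => _; rewrite mulVf.
have inv2 : forall j, snat lam j * snat (fun k => (lam k)^-1) j = 1.
  by move=> j; rewrite /snat; case: ifP => _; rewrite mulfV ?invr_eq0.
exists (phi lam), (phi (fun k => (lam k)^-1)); split.
- by move=> i; rewrite (compDgen hl hb); apply: Dgen_in.
- by move=> i; rewrite (compDgen hl' hb'); apply: Dgen_in.
- move=> j; rewrite tnth_mktuple comp_mpolyZ comp_mpolyXU -tnth_nth tnth_mktuple.
  by rewrite scalerA inv2 scale1r subrr; apply: zero_in.
- move=> j; rewrite tnth_mktuple comp_mpolyZ comp_mpolyXU -tnth_nth tnth_mktuple.
  by rewrite scalerA inv1 scale1r subrr; apply: zero_in.
Qed.

End Key.

Section Lam.
Variables (K : fieldType) (n : nat) (hn : (3 <= n)%N) (a : 'I_n -> K)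
  (ha : forall i, a i != 0).

Definition an (k : nat) : K := oapp a 1 (insub k).

Lemma an_val (i : 'I_n) : an (val i) = a i.
Proof. by rewrite /an valK. Qed.

Lemma an_nz k : an k != 0.
Proof. by rewrite /an; case: insub => [i|] /=; rewrite ?ha ?oner_eq0. Qed.

Fixpoint hh (d : nat) : K :=
  match d with
  | d'.+2 => (an (n - d' - 1) * hh d')^-1
  | _ => 1
  end.

Fixpoint ff (m : nat) : K :=
  match m with
  | 0 => (an 1)^-1
  | m'.+1 => (an (m'.*2 + 3) * ff m')^-1
  end.

Lemma hh_nz d : hh d != 0.
Proof.
have: hh d != 0 /\ hh d.+1 != 0.
  elim: d => [|d [IH1 IH2]]; first by rewrite /= oner_eq0.
  by split => //=; rewrite invr_eq0 mulf_neq0 ?an_nz.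
by case.
Qed.

Lemma ff_nz m : ff m != 0.
Proof. by elim: m => [|m IH] /=; rewrite invr_eq0 ?mulf_neq0 ?an_nz. Qed.

Definition lamE (k : nat) : K :=
  if k == 0%N then (an 2 * (if (3 < n)%N then hh (n - 3) else 1))^-1
  else if k == 1%N then 1 else hh (n - k).

Definition lamO (k : nat) : K :=
  if k == 0%N then (an 2 * (if (3 < n)%N then hh (n - 3) else 1))^-1
  else if k == 1%N then 1
  else if odd k then hh (n - k) else ff (k - 2)./2.

End Lam.

Section Proofs.
Variables (K : fieldType) (n : nat) (hn : (3 <= n)%N) (a : 'I_n -> K)
  (ha : forall i, a i != 0).

Local Notation an := (an a).
Local Notation hh := (hh a).
Local Notation an_nz := (an_nz ha).
Local Notation hh_nz := (hh_nz ha).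

Lemma hh_step d : hh d.+2 = (an (n - d - 1) * hh d)^-1.
Proof. by []. Qed.

Lemma lamE_nz k : lamE a k != 0.
Proof.
rewrite /lamE; case: ifP => _; last by case: ifP => _; rewrite ?oner_eq0 ?hh_nz.
by rewrite invr_eq0 mulf_neq0 ?an_nz //; case: ifP; rewrite ?hh_nz ?oner_eq0.
Qed.

Lemma evenD k : (k < n)%N ->
  (if k == 0%N then an 0 * lamE a 2 else if k == 1%N then an 1 * lamE a 2 else 1)
  = an k * Dcf n (lamE a) k.
Proof.
move=> hk; rewrite /Dcf.
case: k hk => [|[|[|k]]] hk //=.
  rewrite /lamE /=; case: ifP => _; field; rewrite ?an_nz ?hh_nz //.
have e : (n - k.+2 = (n - k.+4).+2)%N by lia.
have e2 : (n - (n - k.+4) - 1 = k.+3)%N by lia.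
rewrite /lamE /= e hh_step e2.
case: ifP => h.
  by field; rewrite ?an_nz ?hh_nz.
have -> : (n - k.+4 = 0)%N by lia.
by rewrite /=; field; rewrite ?an_nz.
Qed.


Lemma lamO_nz k : lamO a k != 0.
Proof.
rewrite /lamO; case: ifP => _.
  by rewrite invr_eq0 mulf_neq0 ?an_nz //; case: ifP; rewrite ?hh_nz ?oner_eq0.
case: ifP => _; first by rewrite oner_eq0.
by case: ifP => _; rewrite ?hh_nz ?(ff_nz ha).
Qed.

Lemma oddD k : odd n -> (k < n)%N ->
  (if k == 0%N then an 0 * lamO a 2 else 1) = an k * Dcf n (lamO a) k.
Proof.
move=> on hk; rewrite /Dcf.
case: k hk => [|[|[|k]]] hk //=.
  by rewrite /lamO /= mulfV ?an_nz.
  rewrite /lamO /=; case: ifP => _; field; rewrite ?an_nz ?hh_nz //.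
rewrite /lamO /=.
case ok: (odd k) => /=.
  have e : (n - k.+2 = (n - k.+4).+2)%N by lia.
  have e2 : (n - (n - k.+4) - 1 = k.+3)%N by lia.
  rewrite e hh_step e2.
  case: ifP => h.
    by field; rewrite ?an_nz ?hh_nz.
  have -> : (n - k.+4 = 0)%N by lia.
  by rewrite /=; field; rewrite ?an_nz.
have h4 : (k.+4 < n)%N.
  have : k.+3 != n.-1.
    apply/negP => /eqP e; move: on; rewrite -[n](@prednK _) ?(leq_trans _ hn) //.
    by rewrite /= -e /= ok.
  lia.
rewrite h4 /= halfK ok subn0 addn3.
have -> : (k.+2 - 2 = k)%N by lia.
by field; rewrite ?an_nz ?(ff_nz ha).
Qed.

End Proofs.

Unset Implicit Arguments.

Theorem mainTheorem15 (K : fieldType) (n : nat) (hn : (3 <= n)%N)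
  (a : 'I_n -> K) (ha : forall i, a i != 0) :
  (~~ odd n -> exists alpha beta : K, alpha != 0 /\ beta != 0 /\
     XD_iso a (fun i : 'I_n => if val i == 0%N then alpha
                               else if val i == 1%N then beta else 1))
  /\
  (odd n -> exists alpha : K, alpha != 0 /\
     XD_iso a (fun i : 'I_n => if val i == 0%N then alpha else 1)).
Proof.
split.
- move=> _; exists (an a 0 * lamE a 2), (an a 1 * lamE a 2).
  split; first by apply: mulf_neq0; [exact: an_nz | exact: lamE_nz].
  split; first by apply: mulf_neq0; [exact: an_nz | exact: lamE_nz].
  apply: (@key K n hn (lamE a) a); first exact: lamE_nz.
  by move=> i /=; rewrite -an_val; exact: (evenD hn ha (ltn_ord i)).
- move=> on; exists (an a 0 * lamO a 2).
  split; first by apply: mulf_neq0; [exact: an_nz | exact: lamO_nz].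
  apply: (@key K n hn (lamO a) a); first exact: lamO_nz.
  by move=> i /=; rewrite -an_val; exact: (oddD hn ha on (ltn_ord i)).
Qed.
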